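(* Consider the problem of maximizing a linear function $g(\mathbf{z})$ over $\mathbf{z}=(\mathbf{x},\mathbf{y})\in\mathbb{R}^{m+n}$ subject to $\mathcal{B}(\mathbf{x},\mathbf{y})\preceq 0$, where $\mathcal{B}(\mathbf{x},\mathbf{y})=F+\sum_i x_iH_i+\sum_j y_jG_j+\sum_{i,j}x_iy_jF_{i,j}$. Run the iterative procedure described below starting from a strictly feasible $\mathbf{z}^0$ (i.e., $\mathcal{B}(\mathbf{z}^0)\prec 0$). Then every iterate $\mathbf{z}^i$ produced by the procedure (for every $i$ for which it is produced) is a feasible solution of this problem, i.e., $\mathcal{B}(\mathbf{z}^i)\preceq 0$.
   Context: $F,H_i,G_j,F_{i,j}$ are constant real symmetric $p\times p$ matrices; $\preceq$ is the positive-semidefinite (Loewner) order. Decompose $\mathcal{B}=\mathcal{B}^+-\mathcal{B}^-$ as follows: $\Gamma$ is the $mp\times np$ block matrix with $(i,j)$ block $\tfrac12F_{i,j}$, $\Omega=(H_1\cdots H_m\ G_1\cdots G_n)$, $M=\begin{pmatrix}0&\Gamma\\ \Gamma^{\mathsf T}&0\end{pmatrix}=V^{\mathsf T}DV$ an eigendecomposition, $D^+$ is $D$ with negative entries set to $0$, $D^-=D^+-D$, $M_1=V^{\mathsf T}D^+V$, $M_2=V^{\mathsf T}D^-V$, $\mathcal{B}^+(\mathbf{z})=(\mathbf{z}\otimes I)^{\mathsf T}M_1(\mathbf{z}\otimes I)+\Omega(\mathbf{z}\otimes I)+F$, $\mathcal{B}^-(\mathbf{z})=(\mathbf{z}\otimes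 I)^{\mathsf T}M_2(\mathbf{z}\otimes I)$ ($I$ the $p\times p$ identity). $\mathcal{D}\mathcal{B}^-(\mathbf{z})(\mathbf{u})=\sum_i u_i\,\partial\mathcal{B}^-/\partial z_i(\mathbf{z})$. The iterative procedure (Algorithm 1, BMI-DC): given $\mathbf{z}^k$, let $\mathbf{z}^{k+1}$ be an optimal solution of the convex problem: maximize $g(\mathbf{z})+\tfrac12\delta\|\mathbf{z}-\mathbf{z}^k\|^2$ (with a fixed $\delta<0$) subject to $\mathcal{B}^+(\mathbf{z})-\mathcal{B}^-(\mathbf{z}^k)-\mathcal{D}\mathcal{B}^-(\mathbf{z}^k)(\mathbf{z}-\mathbf{z}^k)\preceq 0$; repeat until $\|\mathbf{z}^k-\mathbf{z}^{k-1}\|<\varepsilon$ for a given tolerance $\varepsilon\ge 0$, and return the set of all iterates $\mathbf{z}^0,\dots,\mathbf{z}^k$. *)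

(* Defs.v *)
From HB Require Import structures.
From mathcomp Require Import all_boot all_order all_algebra.
From mathcomp Require Import all_classical all_reals all_analysis.
Set Implicit Arguments. Unset Strict Implicit. Unset Printing Implicit Defensive.
Import Order.TTheory GRing.Theory Num.Theory.
Import numFieldNormedType.Exports.
Local Open Scope ring_scope.

(* Decomposition of a block index k : 'I_(a*b) into (block i, inner index r),
   the inverse of mathcomp's mxvec_index (row-major: k = i*b + r). *)
Definition vidx (a b : nat) (k : 'I_(a * b)) : 'I_a * 'I_b :=
  enum_val (cast_ord (esym (mxvec_cast a b)) k).

Section BMI.
Variable R : realType.
Variables m n p : nat.

(* the Kronecker product  z (x) I_p  for a column vector z *)
Definition kronI (a : nat) (z : 'cV[R]_a) : 'M[R]_(a * p, p) :=
  \matrix_(k, s) (z ((vidx k).1) 0 * (((vidx k).2) == s)%:R).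

Definition Gamma (Fij : 'I_m -> 'I_n -> 'M[R]_p) : 'M[R]_(m * p, n * p) :=
  \matrix_(k, l) (2^-1 * Fij ((vidx k).1) ((vidx l).1) ((vidx k).2) ((vidx l).2)).

(* M = [[0, Gamma], [Gamma^T, 0]], indexed consistently with kronI *)
Definition Mmat (Fij : 'I_m -> 'I_n -> 'M[R]_p) : 'M[R]_((m + n) * p) :=
  \matrix_(k, l)
    let ir := vidx k in let js := vidx l in
    match @fintype.split m n ir.1, @fintype.split m n js.1 with
    | inl i, inr j => Gamma Fij (mxvec_index i ir.2) (mxvec_index j js.2)
    | inr j, inl i => (Gamma Fij)^T (mxvec_index j ir.2) (mxvec_index i js.2)
    | _, _ => 0
    end.

(* Omega = (H_1 ... H_m G_1 ... G_n) : p x (m+n)p *)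
Definition Omega (H : 'I_m -> 'M[R]_p) (G : 'I_n -> 'M[R]_p) : 'M[R]_(p, (m + n) * p) :=
  \matrix_(r, l)
    let js := vidx l in
    match @fintype.split m n js.1 with
    | inl i => H i r js.2
    | inr j => G j r js.2
    end.

Definition Bfun (F : 'M[R]_p) (H : 'I_m -> 'M[R]_p) (G : 'I_n -> 'M[R]_p)
  (Fij : 'I_m -> 'I_n -> 'M[R]_p) (z : 'cV[R]_(m + n)) : 'M[R]_p :=
  F + \sum_(i < m) z (lshift n i) 0 *: H i + \sum_(j < n) z (rshift m j) 0 *: G j
    + \sum_(i < m) \sum_(j < n) (z (lshift n i) 0 * z (rshift m j) 0) *: Fij i j.

Definition Dplus (d : 'rV[R]_((m + n) * p)) : 'M[R]_((m + n) * p) :=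
  diag_mx (map_mx (fun t => Num.max t 0) d).
Definition Dminus (d : 'rV[R]_((m + n) * p)) : 'M[R]_((m + n) * p) :=
  Dplus d - diag_mx d.
Definition M1 (V : 'M[R]_((m + n) * p)) d := V^T *m Dplus d *m V.
Definition M2 (V : 'M[R]_((m + n) * p)) d := V^T *m Dminus d *m V.

Definition Bplus (F : 'M[R]_p) H G V d (z : 'cV[R]_(m + n)) : 'M[R]_p :=
  (kronI z)^T *m M1 V d *m kronI z + Omega H G *m kronI z + F.
Definition Bminus V d (z : 'cV[R]_(m + n)) : 'M[R]_p :=
  (kronI z)^T *m M2 V d *m kronI z.

Definition partialD (f : 'cV[R]_(m + n) -> 'M[R]_p) (i : 'I_(m + n)) z : 'M[R]_p :=
  'D_(delta_mx i 0) f z.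
Definition Dfun (f : 'cV[R]_(m + n) -> 'M[R]_p) z (u : 'cV[R]_(m + n)) : 'M[R]_p :=
  \sum_(i < m + n) u i 0 *: partialD f i z.
End BMI.

Definition nsd (R : realType) (p : nat) (A : 'M[R]_p) : Prop :=
  forall v : 'cV[R]_p, (v^T *m A *m v) 0 0 <= 0.
Definition nd (R : realType) (p : nat) (A : 'M[R]_p) : Prop :=
  forall v : 'cV[R]_p, v != 0 -> (v^T *m A *m v) 0 0 < 0.

Definition enorm (R : realType) (a : nat) (z : 'cV[R]_a) : R :=
  Num.sqrt (\sum_(i < a) z i 0 ^+ 2).

Definition sub_feasible (R : realType) (m n p : nat) (F : 'M[R]_p)
  (H : 'I_m -> 'M[R]_p) (G : 'I_n -> 'M[R]_p) (V : 'M[R]_((m + n) * p))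
  (d : 'rV[R]_((m + n) * p)) (zk z : 'cV[R]_(m + n)) : Prop :=
  nsd (Bplus F H G V d z - Bminus V d zk - Dfun (Bminus V d) zk (z - zk)).

Definition sub_obj (R : realType) (a : nat) (c : 'rV[R]_a) (delta : R)
  (zk z : 'cV[R]_a) : R :=
  (c *m z) 0 0 + 2^-1 * delta * enorm (z - zk) ^+ 2.

Definition sub_optimal (R : realType) (m n p : nat) (F : 'M[R]_p)
  (H : 'I_m -> 'M[R]_p) (G : 'I_n -> 'M[R]_p) (V : 'M[R]_((m + n) * p))
  (d : 'rV[R]_((m + n) * p)) (c : 'rV[R]_(m + n)) (delta : R)
  (zk znew : 'cV[R]_(m + n)) : Prop :=
  sub_feasible F H G V d zk znew /\
  forall z, sub_feasible F H G V d zk z ->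
    sub_obj c delta zk z <= sub_obj c delta zk znew.

(* Main.v *)
Require Import Defs.
From HB Require Import structures.
From mathcomp Require Import all_boot all_order all_algebra.
From mathcomp Require Import all_classical all_reals all_analysis.
From mathcomp Require Import ring lra.
Import Order.TTheory GRing.Theory Num.Theory.
Import numFieldNormedType.Exports.
Local Open Scope ring_scope.

Set Implicit Arguments. Unset Strict Implicit.
Local Open Scope classical_set_scope.


Lemma derive_quad (R : realType) (V W : normedModType R) (f : V -> W) a v A B :
  (forall h : R, h != 0 -> h^-1 *: (f (h *: v + a) - f a) = A + h *: B) ->
  'D_v f a = A.
Proof.
move=> Hf; rewrite /derive.
apply: cvg_lim; first exact: norm_hausdorff.
have HL : (fun h : R => A + h *: B) @ 0^' --> A.
  apply: cvg_within_filter.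
  have H1 : (fun h : R => h *: B) @ nbhs (0:R) --> (0:R) *: B.
    by apply: cvgZ; [exact: cvg_id | exact: cvg_cst].
  have := cvgD (cvg_cst A) H1.
  rewrite scale0r addr0. exact.
apply: (cvg_trans _ HL).
apply: near_eq_cvg; near=> h.
rewrite /= Hf //. near: h. exact: nbhs_dnbhs_neq.
Unshelve. all: by end_near.
Qed.

Section Aux.
Variable R : realType.

Lemma vidxK a b (i : 'I_a) (j : 'I_b) : vidx (mxvec_index i j) = (i, j).
Proof. by rewrite /vidx /mxvec_index cast_ordK enum_rankK. Qed.

Lemma sum_idx a b (f : 'I_(a * b) -> R) :
  \sum_(k < a * b) f k = \sum_(i < a) \sum_(j < b) f (mxvec_index i j).
Proof.
rewrite pair_big /=.
rewrite (reindex (uncurry (@mxvec_index a b))) /=; last exact: curry_mxvec_bij.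
by apply: eq_bigr => -[i j].
Qed.

Lemma sum_pick q (F : 'I_q -> R) s : \sum_(s' < q) F s' * (s' == s)%:R = F s.
Proof.
rewrite (bigD1 s) //= eqxx mulr1 big1 ?addr0 // => i /negbTE ->.
by rewrite mulr0.
Qed.

Lemma sum_pick' q (F : 'I_q -> R) s : \sum_(s' < q) (s' == s)%:R * F s' = F s.
Proof. by rewrite -(sum_pick F s); apply: eq_bigr => i _; rewrite mulrC. Qed.

Variable p : nat.

Lemma kronD a (x y : 'cV[R]_a) : kronI p (x + y) = kronI p x + kronI p y.
Proof. by apply/matrixP => k s; rewrite !mxE mulrDl. Qed.

Lemma kronZ a (c : R) (x : 'cV[R]_a) : kronI p (c *: x) = c *: kronI p x.
Proof. by apply/matrixP => k s; rewrite !mxE mulrA. Qed.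

Lemma kron0 a : kronI p (0 : 'cV[R]_a) = 0.
Proof. by apply/matrixP => k s; rewrite !mxE mul0r. Qed.

Lemma kronN a (x : 'cV[R]_a) : kronI p (- x) = - kronI p x.
Proof. by apply/matrixP => k s; rewrite !mxE mulNr. Qed.

Lemma kronB a (x y : 'cV[R]_a) : kronI p (x - y) = kronI p x - kronI p y.
Proof. by rewrite kronD kronN. Qed.

Lemma kron_sum a I (r : seq I) (P : pred I) (F : I -> 'cV[R]_a) :
  kronI p (\sum_(i <- r | P i) F i) = \sum_(i <- r | P i) kronI p (F i).
Proof. exact: (big_morph _ (@kronD a) (@kron0 a)). Qed.

End Aux.


Section MainD.
Variable R : realType.
Variables m n p : nat.

Lemma splitl (i : 'I_m) : fintype.split (lshift n i) = inl i.
Proof. exact: (unsplitK (inl i)). Qed.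
Lemma splitr (j : 'I_n) : fintype.split (rshift m j) = inr j.
Proof. exact: (unsplitK (inr j)). Qed.

Lemma OmegaK (H : 'I_m -> 'M[R]_p) G (z : 'cV[R]_(m+n)) :
  Omega H G *m kronI p z =
  \sum_i z (lshift n i) 0 *: H i + \sum_j z (rshift m j) 0 *: G j.
Proof.
apply/matrixP => r s; rewrite !mxE sum_idx big_split_ord /= !summxE.
congr (_ + _); apply: eq_bigr => i _; rewrite !mxE.
- under eq_bigr do rewrite !mxE vidxK /= splitl mulrA.
  by rewrite sum_pick mulrC.
- under eq_bigr do rewrite !mxE vidxK /= splitr mulrA.
  by rewrite sum_pick mulrC.
Qed.
End MainD.


Section MainE.
Variable R : realType.
Variables p : nat.

Lemma quadK a (M : 'M[R]_(a * p)) (z : 'cV[R]_a) r s :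
  ((kronI p z)^T *m M *m kronI p z) r s =
  \sum_(i < a) \sum_(j < a) z i 0 * z j 0 * M (mxvec_index i r) (mxvec_index j s).
Proof.
rewrite mxE sum_idx.
under eq_bigr => b _.
  under eq_bigr => s' _ do rewrite [kronI p z _ _]mxE vidxK /= mulrA.
  rewrite sum_pick.
  rewrite mxE sum_idx.
  under eq_bigr => a' _.
    under eq_bigr => r' _ do rewrite !mxE vidxK /= mulrAC.
    rewrite sum_pick.
  over.
  rewrite mulr_suml.
over.
rewrite exchange_big /=.
apply: eq_bigr => i _; apply: eq_bigr => j _.
by rewrite mulrAC.
Qed.
End MainE.


Section MainF.
Variable R : realType.
Variables m n p : nat.



Lemma MmatK (Fij : 'I_m -> 'I_n -> 'M[R]_p) (z : 'cV[R]_(m+n)) :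
  (forall i j, (Fij i j)^T = Fij i j) ->
  (kronI p z)^T *m Mmat Fij *m kronI p z =
  \sum_(i < m) \sum_(j < n) (z (lshift n i) 0 * z (rshift m j) 0) *: Fij i j.
Proof.
move=> Hs; apply/matrixP => r s; rewrite quadK !summxE.
rewrite big_split_ord /=.
under eq_bigr => i _.
  rewrite big_split_ord /=.
  under eq_bigr => i' _ do rewrite mxE !vidxK /= !splitl mulr0.
  under [X in _ + X]eq_bigr => j _ do rewrite mxE !vidxK /= splitl splitr mxE vidxK /=.
  rewrite big1 ?add0r //.
over.
under [X in _ + X]eq_bigr => j _.
  rewrite big_split_ord /=.
  under eq_bigr => i _ do rewrite mxE !vidxK /= splitl splitr mxE mxE !vidxK /=.
  under [X in _ + X]eq_bigr => j' _ do rewrite mxE !vidxK /= !splitr mulr0.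
  rewrite [X in _ + X]big1 ?addr0 //.
over.
rewrite [X in _ + X]exchange_big /= -big_split /=.
apply: eq_bigr => i _; rewrite summxE -big_split /=; apply: eq_bigr => j _.
have -> : Fij i j s r = Fij i j r s by rewrite -{1}Hs mxE.
by rewrite !mxE !vidxK /=; field.
Qed.
End MainF.


Section Alg.
Variable R : realType.

Lemma trD a b (X Y : 'M[R]_(a, b)) : (X + Y)^T = X^T + Y^T.
Proof. by apply/matrixP => i j; rewrite !mxE. Qed.
Lemma trZ a b (h : R) (X : 'M[R]_(a, b)) : (h *: X)^T = h *: X^T.
Proof. by apply/matrixP => i j; rewrite !mxE. Qed.

Lemma quad_expand k q (M : 'M[R]_k) (X Y : 'M[R]_(k, q)) :
  (X + Y)^T *m M *m (X + Y) =
  X^T *m M *m X + (X^T *m M *m Y + Y^T *m M *m X) + Y^T *m M *m Y.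
Proof.
rewrite trD !mulmxDl !mulmxDr.
by rewrite !addrA; congr (_ + _); rewrite -!addrA; congr (_ + _); rewrite addrC.
Qed.

Lemma quad_scale k q (M : 'M[R]_k) (X : 'M[R]_(k, q)) (h : R) :
  (h *: X)^T *m M *m (h *: X) = (h * h) *: (X^T *m M *m X).
Proof.
by rewrite trZ -!scalemxAl -scalemxAr scalerA.
Qed.

Lemma lin_scale k q (M : 'M[R]_k) (X Y : 'M[R]_(k, q)) (h : R) :
  X^T *m M *m (h *: Y) + (h *: Y)^T *m M *m X = h *: (X^T *m M *m Y + Y^T *m M *m X).
Proof.
by rewrite trZ -!scalemxAl -scalemxAr scalerDr.
Qed.
End Alg.


Lemma zmod_rearr (R : comRingType) a b (F A B X1 X2 : 'M[R]_(a,b)) :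
  F + A + B + (X1 - X2) = X1 + (A + B) + F - X2.
Proof. by apply/matrixP => i j; rewrite !mxE; ring. Qed.
Lemma zmod2 (R : comRingType) a b (P XX L Q : 'M[R]_(a,b)) :
  P - XX - L - Q = P - (XX + L + Q).
Proof. by apply/matrixP => i j; rewrite !mxE; ring. Qed.

Lemma zmod3 (R : comRingType) a b (A B C D : 'M[R]_(a,b)) :
  A + B + (C + D) = A + C + (B + D).
Proof. by apply/matrixP => i j; rewrite !mxE; ring. Qed.

Section H.
Variable R : realType.
Variables m n p : nat.

Lemma BfunE F (H : 'I_m -> 'M[R]_p) G Fij V d (z : 'cV[R]_(m + n)) :
  (forall i j, (Fij i j)^T = Fij i j) ->
  Mmat Fij = V^T *m diag_mx d *m V ->
  Bfun F H G Fij z = Bplus F H G V d z - Bminus V d z.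
Proof.
move=> Hs hM.
have HM : M1 V d - M2 V d = Mmat Fij.
  by rewrite hM /M1 /M2 -mulmxBl -mulmxBr /Dminus opprB addrC subrK.
have HX : (kronI p z)^T *m M1 V d *m kronI p z - (kronI p z)^T *m M2 V d *m kronI p z
   = \sum_(i < m) \sum_(j < n) (z (lshift n i) 0 * z (rshift m j) 0) *: Fij i j.
  by rewrite -MmatK // -HM mulmxBr mulmxBl.
rewrite /Bfun /Bplus /Bminus -HX OmegaK.
exact: zmod_rearr.
Qed.

Lemma M2_psd (V : 'M[R]_((m + n) * p)) d (x : 'cV[R]_((m + n) * p)) :
  0 <= (x^T *m M2 V d *m x) 0 0.
Proof.
rewrite /M2 !mulmxA -mulmxA -trmx_mul.
set y := V *m x.
have -> : Dminus d = diag_mx (map_mx (fun t => Num.max t 0) d - d).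
  apply/matrixP => i j; rewrite /Dminus /Dplus !mxE -mulrnBl.
  by [].
rewrite (mul_mx_diag y^T) mxE; apply: sumr_ge0 => j _; rewrite !mxE.
rewrite mulrAC -expr2 mulr_ge0 // ?sqr_ge0 // subr_ge0.
by rewrite le_max lexx.
Qed.

Lemma DfunK (V : 'M[R]_((m + n) * p)) d (zk u : 'cV[R]_(m + n)) :
  Dfun (Bminus V d) zk u =
  (kronI p zk)^T *m M2 V d *m kronI p u + (kronI p u)^T *m M2 V d *m kronI p zk.
Proof.
set Lf := fun Y : 'M[R]_((m + n) * p, p) =>
  (kronI p zk)^T *m M2 V d *m Y + Y^T *m M2 V d *m kronI p zk.
have HD : forall i, partialD (Bminus V d) i zk = Lf (kronI p (delta_mx i 0)).
  move=> i; rewrite /partialD; apply: derive_quad => h hn0.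
  rewrite /Bminus kronD kronZ [h *: _ + _]addrC quad_expand quad_scale lin_scale /Lf.
  rewrite addrAC (addrC ((kronI p zk)^T *m M2 V d *m kronI p zk)) addrK -scalerA -scalerDr scalerA.
  by rewrite mulVf // scale1r.
have LfD : {morph Lf : a b / a + b}.
  move=> a b; rewrite /Lf trD mulmxDr !mulmxDl; exact: zmod3.
have Lf0 : Lf 0 = 0 by rewrite /Lf mulmx0 trmx0 !mul0mx addr0.
have LfZ : forall (c : R) Y, Lf (c *: Y) = c *: Lf Y.
  by move=> c Y; rewrite /Lf lin_scale.
have -> : kronI p u = \sum_(i < m + n) u i 0 *: kronI p (delta_mx i 0).
  rewrite {1}(matrix_sum_delta u) kron_sum; apply: eq_bigr => i _.
  by rewrite big_ord1 kronZ.
rewrite -/(Lf _) (big_morph Lf LfD Lf0) /Dfun; apply: eq_bigr => i _.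
by rewrite LfZ HD.
Qed.
End H.

Lemma subE (R : realType) a b (A B : 'M[R]_(a, b)) i j : (A - B) i j = A i j - B i j.
Proof. by rewrite !mxE. Qed.
Unset Implicit Arguments. Set Strict Implicit.
Local Close Scope classical_set_scope.
Local Open Scope ring_scope.


Theorem theorem9 (R : realType) (m n p : nat)
  (F : 'M[R]_p) (H : 'I_m -> 'M[R]_p) (G : 'I_n -> 'M[R]_p)
  (Fij : 'I_m -> 'I_n -> 'M[R]_p)
  (V : 'M[R]_((m + n) * p)) (d : 'rV[R]_((m + n) * p))
  (c : 'rV[R]_(m + n)) (delta eps : R)
  (N : nat) (z : nat -> 'cV[R]_(m + n)) :
  F^T = F ->
  (forall i, (H i)^T = H i) ->
  (forall j, (G j)^T = G j) ->
  (forall i j, (Fij i j)^T = Fij i j) ->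
  V^T *m V = 1%:M ->
  Mmat Fij = V^T *m diag_mx d *m V ->
  delta < 0 ->
  0 <= eps ->
  nd (Bfun F H G Fij (z 0%N)) ->
  (forall k, (k < N)%N -> sub_optimal F H G V d c delta (z k) (z k.+1)) ->
  (forall k, (0 < k < N)%N -> eps <= enorm (z k - z k.-1)) ->
  forall i, (i <= N)%N -> nsd (Bfun F H G Fij (z i)).
Proof.
move=> hF hH hG hFij hV hM hdelta heps hnd hopt hstop [|k] hk.
  move=> v; case: (eqVneq v 0) => [->|hv]; first by rewrite mulmx0 mxE.
  exact: ltW (hnd v hv).
have [hfeas _] := hopt k hk.
set zk := z k; set z' := z k.+1.
set w := z' - zk.
set S := Bplus F H G V d z' - Bminus V d zk - Dfun (Bminus V d) zk w.
have E : Bfun F H G Fij z' = S - (kronI p w)^T *m M2 V d *m kronI p w.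
  rewrite (@BfunE R m n p F H G Fij V d z' hFij hM) /S DfunK zmod2 /Bminus.
  have -> : kronI p z' = kronI p zk + kronI p w by rewrite /w kronB addrC subrK.
  by rewrite quad_expand.
move=> v; rewrite E mulmxBr mulmxBl subE.
have -> : v^T *m ((kronI p w)^T *m M2 V d *m kronI p w) *m v =
          (kronI p w *m v)^T *m M2 V d *m (kronI p w *m v).
  by rewrite trmx_mul !mulmxA.
have h1 := hfeas v.
have h2 := M2_psd V d (kronI p w *m v).
rewrite -/S in h1.
have := lerB h1 h2.
by rewrite subr0.
Qed.
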